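(* For any tree $T$, there exists a non-empty elementary minor of $T$ with the same spectator floor as $T$ if and only if there exists an edge $e$ of $T$ such that contracting $e$ reduces the diameter of $T$.
   Context: All graphs are finite, have no loops, and may have multiple (parallel) edges. A minor of $H$ is any graph obtained from $H$ by a sequence of: deleting an isolated vertex, deleting an edge, contracting an edge that has no edge parallel to it; an elementary minor is one obtained by exactly one such operation. A unique shortest path is a shortest $u$–$v$ path $P$ such that every $u$–$v$ path with the same number of vertices is identical to $P$, where two paths with different edge sequences are different even if their vertex sequences agree; a single vertex is a unique shortest path. The parade number $\mathrm{usp}(G)$ is the largest number of vertices of a unique shortest path in $G$. The spectator number is $\mathrm{sp}(G)=|V(G)|-\mathrm{usp}(G)$. The spectator floor $\lfloor \mathrm{sp}\rfloor(G)$ is the minimum of $\mathrm{sp}(H)$ over all graphs $H$ of which $G$ is a minor. *)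

(* Defs.v *)
From Stdlib Require Import ClassicalEpsilon.
From mathcomp Require Import all_boot.
Set Implicit Arguments. Unset Strict Implicit. Unset Printing Implicit Defensive.

(* A finite loopless multigraph: vertex type, edge type, and the two ends of
   each edge (orientation is irrelevant, see [joins]). *)
Record mgraph := MGraph {
  gV : finType;
  gE : finType;
  gsrc : gE -> gV;
  gdst : gE -> gV;
  gnoloop : forall e, gsrc e != gdst e }.

Definition cdec (P : Prop) : bool :=
  if excluded_middle_informative P then true else false.

Lemma cdecT (P : Prop) : P -> cdec P.
Proof. by rewrite /cdec; case: excluded_middle_informative. Qed.

Definition joins (G : mgraph) (e : gE G) (a b : gV G) : bool :=
  ((gsrc e == a) && (gdst e == b)) || ((gsrc e == b) && (gdst e == a)).

Definition iso (G H : mgraph) : Prop :=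
  exists (fv : gV G -> gV H) (fe : gE G -> gE H),
    [/\ bijective fv, bijective fe &
        forall e, joins (fe e) (fv (gsrc e)) (fv (gdst e))].

Definition del_isolated_vertex (G' G : mgraph) : Prop :=
  exists (v : gV G) (fv : gV G' -> gV G) (fe : gE G' -> gE G),
    (forall e : gE G, (gsrc e != v) && (gdst e != v)) /\
    [/\ injective fv, forall x, fv x != v,
        forall y, y != v -> exists x, fv x = y,
        bijective fe &
        forall e', joins (fe e') (fv (gsrc e')) (fv (gdst e'))].

Definition del_edge (G' G : mgraph) (e0 : gE G) : Prop :=
  exists (fv : gV G' -> gV G) (fe : gE G' -> gE G),
    [/\ bijective fv, injective fe, forall e', fe e' != e0,
        forall e, e != e0 -> exists e', fe e' = e &
        forall e', joins (fe e') (fv (gsrc e')) (fv (gdst e'))].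

(* G' is obtained from G by contracting the edge e0, which must have no
   edge parallel to it: the ends x,y of e0 are identified, e0 is removed,
   all other edges are kept with their ends mapped. *)
Definition contract_edge (G' G : mgraph) (e0 : gE G) : Prop :=
  (forall e, e != e0 -> ~~ joins e (gsrc e0) (gdst e0)) /\
  exists (fv : gV G -> gV G') (fe : gE G' -> gE G),
    (forall y, exists x, fv x = y) /\
    (forall a b, fv a = fv b <->
          (a = b \/ (a = gsrc e0 /\ b = gdst e0) \/ (a = gdst e0 /\ b = gsrc e0))) /\
    [/\ injective fe, forall e', fe e' != e0,
        forall e, e != e0 -> exists e', fe e' = e &
        forall e', joins e' (fv (gsrc (fe e'))) (fv (gdst (fe e')))].

Definition elem_minor (G' G : mgraph) : Prop :=
  del_isolated_vertex G' G \/ (exists e0, @del_edge G' G e0)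
  \/ (exists e0, @contract_edge G' G e0).

Inductive minor : mgraph -> mgraph -> Prop :=
| minor_iso G H : iso G H -> minor G H
| minor_step G K H : elem_minor G K -> minor K H -> minor G H.

(* a u-v path: distinct vertices vs = [u; ...; v], consecutive ones joined
   by the corresponding edge of es *)
Definition is_path (G : mgraph) (u v : gV G) (vs : seq (gV G)) (es : seq (gE G))
  : bool :=
  [&& size vs == (size es).+1, uniq vs, head u vs == u, last u vs == v &
      all (fun p => joins p.1 p.2.1 p.2.2) (zip es (zip vs (behead vs)))].

(* unique shortest u-v path (paths compared as vertex AND edge sequences) *)
Definition usp_path (G : mgraph) (u v : gV G) (vs : seq (gV G)) (es : seq (gE G))
  : Prop :=
  is_path u v vs es /\
  forall vs' es', is_path u v vs' es' ->
    size vs <= size vs' /\ (size vs' = size vs -> vs' = vs /\ es' = es).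

(* parade number: largest number of vertices of a unique shortest path *)
Definition usp (G : mgraph) : nat :=
  \max_(n < #|gV G|.+1 |
        cdec (exists u v vs es, @usp_path G u v vs es /\ size vs = n)) n.

Definition sp (G : mgraph) : nat := #|gV G| - usp G.

Lemma spfloor_ex (G : mgraph) :
  exists n, cdec (exists H, minor G H /\ sp H = n).
Proof.
exists (sp G); apply: cdecT; exists G; split => //; apply: minor_iso.
by exists id, id; split; try exists id => //; move=> e; rewrite /joins !eqxx.
Qed.

Definition spfloor (G : mgraph) : nat := ex_minn (spfloor_ex G).

(* distance (number of edges of a shortest path); all graphs where it is
   used below are connected *)
Definition dist (G : mgraph) (u v : gV G) : nat :=
  \big[minn/#|gV G|]_(n < #|gV G| |
       cdec (exists vs es, @is_path G u v vs es /\ size es = n)) n.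

Definition diam (G : mgraph) : nat :=
  \max_(u : gV G) \max_(v : gV G) dist u v.

Definition connected (G : mgraph) : Prop :=
  forall u v : gV G, exists vs es, @is_path G u v vs es.

(* a cycle: k >= 2 distinct vertices v_0..v_(k-1) and k distinct edges,
   edge i joining v_i and v_(i+1 mod k) *)
Definition is_cycle (G : mgraph) (vs : seq (gV G)) (es : seq (gE G)) : Prop :=
  exists v0 : gV G,
  [/\ 2 <= size vs, size es = size vs, uniq vs, uniq es &
      all (fun p => joins p.1 p.2.1 p.2.2)
          (zip es (zip vs (rcons (behead vs) (head v0 vs))))].

Definition acyclic (G : mgraph) : Prop := forall vs es, ~ @is_cycle G vs es.

Definition is_tree (G : mgraph) : Prop :=
  0 < #|gV G| /\ connected G /\ acyclic G.

(* Main.v *)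
Require Import Defs.
From mathcomp Require Import all_boot.
From mathcomp Require Import zify.
From Stdlib Require Import ClassicalEpsilon.
Set Implicit Arguments. Unset Strict Implicit. Unset Printing Implicit Defensive.

Lemma cdecP (P : Prop) : cdec P -> P.
Proof. by rewrite /cdec; case: excluded_middle_informative. Qed.

Section Walks.
Variable V : finType.
Implicit Types (R : rel V) (x y u v : V) (p q : seq V).

Lemma path_suffix R y q r1 x r2 :
  y :: q = r1 ++ x :: r2 -> path R y q -> path R x r2 /\ last x r2 = last y q.
Proof.
case: r1 => [|z r1] /= [Ey Eq]; subst => //.
rewrite cat_path last_cat /= => /andP[_ /andP[_ ->]]; by [].
Qed.

Lemma shorten_walk R x p : path R x p ->
  exists q, [/\ path R x q, last x q = last x p, uniq (x::q) & size q <= size p].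
Proof.
elim: p x => [|y p IH] x /=.
  by move=> _; exists [::].
case/andP=> Rxy /IH [q [Pq Lq Uq Sq]].
case Hx: (x \in y :: q).
  have [r1 [r2 E]] : exists r1 r2, y :: q = r1 ++ x :: r2.
    by case/splitPr: Hx => r1 r2; exists r1, r2.
  have [P2 L2] := path_suffix E Pq.
  exists r2; split => //; first by rewrite L2.
    by move: Uq; rewrite E cat_uniq => /and3P[_ _ ].
  have : size (y :: q) = size r1 + (size r2).+1 by rewrite E size_cat.
  move=> /= H; lia.
exists (y :: q); split => //=; first by rewrite Rxy.
by rewrite Hx.
Qed.

Definition geo R u p v := [/\ path R u p, last u p = v, uniq (u :: p) &
  forall q, path R u q -> last u q = v -> size p <= size q].

Lemma geo_exists R u v : connect R u v -> exists p, geo R u p v.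
Proof.
case/connectP => p0 P0 L0.
have exP : exists n, cdec (exists p, [/\ path R u p, last u p = v & size p = n]).
  by exists (size p0); apply: cdecT; exists p0.
case: (ex_minnP exP) => m /cdecP [p [Pp Lp Sp]] Hmin.
have [q [Pq Lq Uq Sq]] := shorten_walk Pp.
exists q; split => //; first by rewrite Lq.
move=> q' Pq' Lq'; apply: leq_trans Sq _; rewrite Sp; apply: Hmin; apply: cdecT.
by exists q'.
Qed.

Lemma con_sub R R' x y : (forall a b, R a b -> R' a b) -> connect R x y -> connect R' x y.
Proof.
move=> H; apply: connect_sub => a b /H; exact: connect1.
Qed.

Lemma path_con R x p : path R x p -> connect R x (last x p).
Proof. by move=> P; apply/connectP; exists p. Qed.

Lemma geo_con R u p v : geo R u p v -> connect R u v.
Proof. by case=> P <- _ _; apply: path_con. Qed.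

Fixpoint sys R (s : seq (V * seq V)) : Prop :=
  if s is e :: s' then
    [/\ geo R e.1 e.2 (last e.1 e.2), all (fun w => ~~ connect R e.1 w.1) s' & sys R s']
  else True.

Lemma sys_geo R s e : sys R s -> e \in s -> geo R e.1 e.2 (last e.1 e.2).
Proof.
elim: s => // e' s IH /= [G _ S]; rewrite inE => /orP[/eqP-> //|H]; exact: IH.
Qed.

Definition weight (s : seq (V * seq V)) := sumn (map (fun e => (size e.2).+1) s).

End Walks.

Lemma weight_cons (V : finType) (e : V * seq V) s : weight (e :: s) = (size e.2).+1 + weight s.
Proof. by []. Qed.

Section Split.
Variable V : finType.
Variables (R R' : rel V) (a b : V).
Hypothesis symR : symmetric R.
Hypothesis symR' : symmetric R'.
Hypothesis hsub : forall x y, R' x y -> R x y.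
Hypothesis hdiff : forall x y, R x y -> ~~ R' x y ->
  ((x == a) && (y == b)) || ((x == b) && (y == a)).

Lemma split_first x p : path R x p -> ~~ path R' x p ->
  exists p1 y p2, [/\ p = p1 ++ y :: p2, path R' x p1, R (last x p1) y & ~~ R' (last x p1) y].
Proof.
elim: p x => [|y p IH] x //=.
case/andP => Rxy Pp.
case R'xy: (R' x y) => /= Hn.
  have [p1 [z [p2 [E P1 R1 N1]]]] := IH y Pp Hn.
  by exists (y :: p1), z, p2; rewrite E /= R'xy P1.
by exists [::], y, p; rewrite /= R'xy.
Qed.

Lemma tail_R' w p : path R w p -> ~~ ((a \in w :: p) && (b \in w :: p)) -> path R' w p.
Proof.
elim: p w => [|t p IH] w //=.
case/andP => Rwt Pp Hn.
case R'wt: (R' w t) => /=.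
  apply: IH => //; apply: contra Hn; rewrite !inE => /andP[-> ->]; by rewrite !orbT.
move: Hn; have := hdiff Rwt; rewrite R'wt => /(_ isT) /orP[]/andP[/eqP-> /eqP->];
  by rewrite !inE !eqxx ?orbT.
Qed.

Lemma sys_split s : sys R s -> exists s', [/\ sys R' s', weight s <= weight s' &
  forall z, all (fun e => ~~ connect R e.1 z) s -> all (fun e => ~~ connect R' e.1 z) s'].
Proof.
have cs := sym_connect_sym symR. have cs' := sym_connect_sym symR'.
have sub : forall x y, connect R' x y -> connect R x y by move=> x y; apply: con_sub.
elim: s => [|[u p] s IH] /=.
  by move=> _; exists [::].
case=> Hg Hall /IH [s0 [Hs0 W0 I0]].
set v := last u p in Hg *.
have Iu : all (fun e => ~~ connect R' e.1 u) s0.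
  apply: I0; apply: sub_all Hall => e /=; by rewrite cs.
case: (boolP (connect R' u v)) => Cuv.
  have [q Gq] := geo_exists Cuv.
  exists ((u, q) :: s0); split => /=.
  - case: Gq => Pq Lq Uq Mq. split => //; first by rewrite Lq; split.
    apply: sub_all Iu => e /=; by rewrite cs'.
  - case: Gq => Pq Lq _ _; case: Hg => _ _ _ M; have := M q (sub_path hsub Pq) Lq.
    rewrite !weight_cons /=; lia.
  - move=> z /andP[Nuz Az]; rewrite (I0 z Az) andbT. apply: contra Nuz; exact: sub.
have Np : ~~ path R' u p.
  apply: contra Cuv => P'; exact: path_con.
case: Hg => Pp Lp Up Mp.
have [p1 [y [p2 [E P1 Rxy Nxy]]]] := split_first Pp Np.
set x := last u p1 in Rxy Nxy.
have Ex : last u p1 = x by [].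
have Up' : uniq ((u :: p1) ++ y :: p2) by rewrite E in Up.
have xab := hdiff Rxy Nxy.
have xin : x \in u :: p1 by apply: mem_last.
move: Up'; rewrite cat_uniq => /and3P[U1 Hd U2].
have xnot : x \notin y :: p2.
  apply: contra Hd => H; apply/hasP; by exists x.
have PR : path R u p1 && path R x (y :: p2) by rewrite -cat_path -E.
case/andP: PR => _ /= /andP[_ P2].
have P2' : path R' y p2.
  apply: tail_R' => //; move: xnot; case/orP: xab => /andP[/eqP <- _] Hn;
  apply/negP => /andP[H1 H2]; by rewrite ?H1 ?H2 in Hn.
have Lv : last y p2 = v by rewrite /v E last_cat.
have Sp : size p = size p1 + (size p2).+1 by rewrite E size_cat.
have Cuy : connect R u y.
  apply: connect_trans (connect1 Rxy); exact: (path_con (sub_path hsub P1)).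
clearbody x v.
exists ((u, p1) :: (y, p2) :: s0); split => /=.
- split.
  + rewrite Ex; split => // q Pq Lq.
    have Pq' : path R u (q ++ y :: p2) by rewrite cat_path Lq /= Rxy P2 (sub_path hsub Pq).
    have := Mp _ Pq'; rewrite last_cat Lq /= Lv size_cat /= Sp leq_add2r; by move/(_ erefl).
  + apply/andP; split.
      apply: contra Cuv => C; apply: connect_trans C _; rewrite -Lv; exact: path_con.
    apply: sub_all Iu => e /=; by rewrite cs'.
  + split => //.
    * split => // q Pq Lq.
      have Pq' : path R u (p1 ++ y :: q) by rewrite cat_path Ex /= Rxy (sub_path hsub Pq) (sub_path hsub P1).
      have := Mp _ Pq'; rewrite last_cat /= Lq Lv size_cat /= Sp !addnS ltnS leq_add2l; by move/(_ erefl).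
    * have : all (fun e => ~~ connect R e.1 y) s.
        apply: sub_all Hall => e /= H; apply: contra H => C.
        by apply: connect_trans Cuy _; rewrite cs.
      move/I0; apply: sub_all => e /=; by rewrite cs'.
- rewrite !weight_cons /= Sp; move: W0; clear; lia.
- move=> z /andP[Nuz Az]; rewrite (I0 z Az) andbT.
  apply/andP; split; apply: contra Nuz => C.
    exact: sub.
  apply: connect_trans Cuy (sub _ _ C).
Qed.

End Split.

Section Pull.
Variables V1 V2 : finType.
Variable f : V1 -> V2.
Variables (R1 : rel V1) (R2 : rel V2).
Hypothesis hf : forall x y, R1 x y = R2 (f x) (f y).
Hypothesis hcl : forall x y2, R2 (f x) y2 -> exists y, f y = y2.

Lemma path_f x p : path R2 (f x) (map f p) = path R1 x p.
Proof. by elim: p x => //= y p IH x; rewrite hf IH. Qed.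

Lemma con_f x y : connect R1 x y -> connect R2 (f x) (f y).
Proof.
case/connectP => p P ->; apply/connectP; exists (map f p); first by rewrite path_f.
by rewrite last_map.
Qed.

Lemma pull_walk p2 x : path R2 (f x) p2 -> exists p1, map f p1 = p2.
Proof.
elim: p2 x => [|y2 p2 IH] x /=; first by exists [::].
case/andP => /hcl [y Ey]; rewrite -Ey => /IH [p1 E1].
by exists (y :: p1); rewrite /= E1.
Qed.

Lemma sys_pull s2 : sys R2 s2 -> (forall e, e \in s2 -> exists u, f u = e.1) ->
  exists s1, [/\ sys R1 s1, weight s1 = weight s2 & map (fun e => f e.1) s1 = map fst s2].
Proof.
elim: s2 => [|[u2 p2] s2 IH] /=.
  by move=> _ _; exists [::].
case=> [[Pp Lp Up Mp] Hall Hs] Him.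
have [|s1 [S1 W1 M1]] := IH Hs.
  by move=> e He; apply: Him; rewrite inE He orbT.
have [u Eu] := Him (u2, p2) (mem_head _ _).
move: Eu Pp Lp Up Mp => /= Eu; rewrite -Eu => Pp Lp Up Mp.
have [p1 E1] := pull_walk Pp.
move: Pp Up Mp; rewrite -E1 => Pp Up Mp.
exists ((u, p1) :: s1); split => /=.
- split => //.
  + split => //.
    * by rewrite -path_f.
    * by apply: (@map_uniq _ _ f).
    * move=> q Pq Lq; rewrite -(size_map f p1) -(size_map f q); apply: Mp.
        by rewrite path_f.
      by rewrite !last_map Lq.
  + have : all (fun h => ~~ connect R2 (f u) h) (map fst s2) by rewrite all_map Eu; apply: sub_all Hall => w.
    rewrite -M1 all_map; apply: sub_all => e /=; apply: contra; exact: con_f.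
- by rewrite !weight_cons W1 /= size_map.
- by rewrite M1.
Qed.

End Pull.

Section Contract.
Variables V1 V2 : finType.
Variable f : V1 -> V2.
Variables (R1 : rel V1) (R2 : rel V2) (a b : V1).
Hypothesis symR1 : symmetric R1.
Hypothesis symR2 : symmetric R2.
Hypothesis hmap : forall s t, R1 s t -> f s = f t \/ R2 (f s) (f t).
Hypothesis hlift : forall x' y', R2 x' y' -> exists x y, [/\ f x = x', f y = y' & R1 x y].
Hypothesis hab : R1 a b.
Hypothesis hfab : f a = f b.
Hypothesis hid : forall x y, f x = f y -> x = y \/ (x = a /\ y = b) \/ (x = b /\ y = a).

Lemma lift_walk q u' : path R2 u' q -> forall u v, f u = u' -> f v = last u' q ->
  exists r, [/\ path R1 u r, last u r = v & size r <= size q + count_mem (f a) (u' :: q)].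
Proof.
elim: q u' => [|y' q IH] u' /=.
  move=> _ u v Hu Hv; rewrite -Hv in Hu.
  case: (hid Hu) => [E|[[E1 E2]|[E1 E2]]]; subst.
  - by exists [::].
  - exists [:: b]; rewrite /= hab; split => //.
    by rewrite -hfab eqxx.
  - exists [:: a]; rewrite /= symR1 hab; split => //.
    by rewrite eqxx.
case/andP => /hlift [x1 [y1 [Ex1 Ey1 R11]]] Pq u v Hu Hv.
have [r1 [Pr1 Lr1 Sr1]] := IH y' Pq y1 v Ey1 Hv.
have : f u = f x1 by rewrite Hu Ex1.
case/hid => [->|Hs].
  exists (y1 :: r1); rewrite /= R11 Pr1 Lr1; split => //.
  move: Sr1 => /=; case: (u' == f a); case: (y' == f a) => /=; lia.
have Hu' : u' = f a by case: Hs => [][E _]; rewrite -Hu E // -hfab.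
have Rux : R1 u x1 by case: Hs => [][-> ->]; rewrite // symR1.
exists (x1 :: y1 :: r1); rewrite /= Rux R11 Pr1 Lr1 Hu' eqxx; split => //.
move: Sr1 => /=; case: (y' == f a) => /=; lia.
Qed.

Lemma map_walk x p : path R1 x p -> exists q, [/\ path R2 (f x) q,
  last (f x) q = f (last x p), size q <= size p &
  (~~ path (fun s t => f s != f t) x p -> size q < size p)].
Proof.
elim: p x => [|y p IH] x /=.
  by move=> _; exists [::].
case/andP => Rxy /IH [q [Pq Lq Sq Tq]].
case: (eqVneq (f x) (f y)) => Hxy.
  exists q; rewrite Hxy; split => //; lia.
have R2xy : R2 (f x) (f y) by case: (hmap Rxy) => // E; rewrite E eqxx in Hxy.
exists (f y :: q); rewrite /= R2xy Pq Lq; split => //.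
Qed.

Lemma con_map x y : connect R1 x y -> connect R2 (f x) (f y).
Proof.
case/connectP => p P ->; have [q [Pq Lq _ _]] := map_walk P.
by apply/connectP; exists q.
Qed.

Lemma con_lift x y : connect R2 (f x) (f y) -> connect R1 x y.
Proof.
case/connectP => q P L; have [r [Pr Lr _]] := lift_walk P erefl L.
by apply/connectP; exists r.
Qed.

Lemma sys_contract s : sys R1 s -> exists s', [/\ sys R2 s',
  weight s <= weight s' + has (fun e => f a \in e.1 :: e.2) s' &
  forall z, all (fun e => ~~ connect R1 e.1 z) s -> all (fun e => ~~ connect R2 e.1 (f z)) s'].
Proof.
have cs1 := sym_connect_sym symR1. have cs2 := sym_connect_sym symR2.
elim: s => [|[u p] s IH] /=.
  by move=> _; exists [::].
case=> Hg Hall /IH [s0 [Hs0 W0 I0]].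
set v := last u p in Hg *.
have Iu : all (fun e => ~~ connect R2 e.1 (f u)) s0.
  apply: I0; apply: sub_all Hall => e /=; by rewrite cs1.
have [q Gq] := geo_exists (con_map (geo_con Hg)).
case: (Gq) => Pq Lq Uq Mq.
have [r [Pr Lr Sr]] := lift_walk Pq erefl (esym Lq).
case: Hg => Pp Lp Up Mp.
have Spr := Mp r Pr Lr.
exists ((f u, q) :: s0); split => /=.
- split => //; first by rewrite Lq.
  apply: sub_all Iu => e /=; by rewrite cs2.
- rewrite (count_uniq_mem _ Uq) in Sr.
  have nAB : ~~ ((f a \in f u :: q) && has (fun e => f a \in e.1 :: e.2) s0).
    apply/negP => /andP[H1 /hasP [e He H2]].
    have C1 := path_connect Pq H1.
    have [Pe _ _ _] := sys_geo Hs0 He.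
    have C2 := path_connect Pe H2.
    have := allP Iu e He; rewrite /=; apply/negP/negPn.
    by apply: connect_trans C2 _; rewrite cs2.
  rewrite !weight_cons /=.
  move: nAB Sr W0; case: (f a \in f u :: q); case: (has _ _) => /=; lia.
- move=> z /andP[Nuz Az]; rewrite (I0 z Az) andbT.
  apply: contra Nuz; exact: con_lift.
Qed.

End Contract.

Lemma bigmin_le_seq (I : eqType) r (P : pred I) (F : I -> nat) N j :
  j \in r -> P j -> \big[minn/N]_(i <- r | P i) F i <= F j.
Proof.
elim: r => // h t IH; rewrite inE big_cons => /orP[/eqP<- Pj|jt Pj].
  by rewrite Pj geq_minl.
case: ifP => _; last exact: IH.
exact: leq_trans (geq_minr _ _) (IH jt Pj).
Qed.

Lemma bigmin_ord_le N (P : pred 'I_N) (i : 'I_N) : P i -> \big[minn/N]_(j < N | P j) j <= i.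
Proof. move=> Pi; exact: bigmin_le_seq (mem_index_enum i) Pi. Qed.

Section Graph.
Variable G : mgraph.
Implicit Types (x y u v : gV G) (e : gE G).

Definition adj : rel (gV G) := fun x y => [exists e, joins e x y].
Definition adjn e0 : rel (gV G) := fun x y => [exists e, (e != e0) && joins e x y].

Lemma joinsC e x y : joins e x y = joins e y x.
Proof. by rewrite /joins orbC. Qed.

Lemma adj_sym : symmetric adj.
Proof. by move=> x y; apply/existsP/existsP => [][e H]; exists e; rewrite joinsC. Qed.

Lemma adjn_sym e0 : symmetric (adjn e0).
Proof. by move=> x y; apply/existsP/existsP => [][e H]; exists e; rewrite joinsC. Qed.

Fixpoint ep x (p : seq (gV G)) (es : seq (gE G)) : bool :=
  match p, es with
  | [::], [::] => true
  | y :: p', e :: es' => joins e x y && ep y p' es'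
  | _, _ => false
  end.

Lemma ep_size x p es : ep x p es -> size p = size es.
Proof. by elim: p x es => [|y p IH] x [|e es] //= /andP[_ /IH ->]. Qed.

Lemma ep_path x p es : ep x p es -> path adj x p.
Proof.
elim: p x es => [|y p IH] x [|e es] //= /andP[J /IH ->]; rewrite andbT.
by apply/existsP; exists e.
Qed.

Lemma path_ep x p : path adj x p -> exists es, ep x p es.
Proof.
elim: p x => [|y p IH] x /=; first by exists [::].
case/andP => /existsP [e J] /IH [es E]; by exists (e :: es); rewrite /= J.
Qed.

Lemma ep_pathn e0 x p es : ep x p es -> e0 \notin es -> path (adjn e0) x p.
Proof.
elim: p x es => [|y p IH] x [|e es] //= /andP[J E]; rewrite inE negb_or => /andP[ne N].
rewrite (IH _ _ E N) andbT; apply/existsP; exists e; by rewrite eq_sym ne J.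
Qed.

Lemma pathn_ep e0 x p : path (adjn e0) x p -> exists es, ep x p es /\ e0 \notin es.
Proof.
elim: p x => [|y p IH] x /=; first by exists [::].
case/andP => /existsP [e /andP[ne J]] /IH [es [E N]]; exists (e :: es).
by rewrite /= J E inE negb_or eq_sym ne.
Qed.

Lemma zip_ep x p es : size p = size es ->
  all (fun q => joins q.1 q.2.1 q.2.2) (zip es (zip (x :: p) p)) = ep x p es.
Proof.
by elim: p x es => [|y p IH] x [|e es] //= [S]; rewrite IH.
Qed.

Lemma is_pathP u v vs es : is_path u v vs es <->
  exists p, [/\ vs = u :: p, ep u p es, uniq (u :: p) & last u p = v].
Proof.
split.
  case: vs => [|x p]; rewrite /is_path //= => /and5P[/eqP[S] U /eqP H /eqP L A].
  subst x; exists p; split => //; by rewrite -zip_ep.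
case=> p [-> E U L]; apply/and5P; split => //=.
- by rewrite (ep_size E).
- by rewrite L.
- by rewrite zip_ep ?(ep_size E).
Qed.

Lemma card_uniq_lt x p : uniq (x :: p) -> size p < #|gV G|.
Proof.
move=> /card_uniqP U; have := max_card (mem (x :: p)); by rewrite U.
Qed.

Lemma geo_dist u p v : geo adj u p v -> dist u v = size p.
Proof.
case=> P L U M.
have lt := card_uniq_lt U.
apply/eqP; rewrite eqn_leq; apply/andP; split.
  rewrite /dist; apply: leq_trans (bigmin_ord_le (i := Ordinal lt) _) _ => //.
  apply: cdecT; have [es E] := path_ep P; exists (u :: p), es; split; last by rewrite /= (ep_size E).
  by apply/is_pathP; exists p.
rewrite /dist; elim/big_ind: _ => //.
- exact: ltnW.
- by move=> m1 m2 H1 H2; rewrite leq_min H1 H2.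
- move=> i /cdecP [vs [es [/is_pathP [q [E0 E Uq Lq] ] S]]]; subst vs.
  rewrite -S -(ep_size E); apply: M => //; exact: ep_path E.
Qed.

Lemma dist_le_diam u v : dist u v <= diam G.
Proof. rewrite /diam; apply: (bigmax_sup u) => //; exact: (bigmax_sup v). Qed.

Lemma usp_geo u v p es : usp_path u v (u :: p) es -> geo adj u p v.
Proof.
case=> /is_pathP [p' [E0 E U L]] M; case: E0 => E0; subst p'.
split => //; first exact: ep_path E.
move=> q Pq Lq.
have [q' [Pq' Lq' Uq' Sq']] := shorten_walk Pq.
have [es' E'] := path_ep Pq'.
have : is_path u v (u :: q') es' by apply/is_pathP; exists q'; rewrite Lq' Lq.
case/M => /= S _; rewrite ltnS in S; exact: leq_trans S Sq'.
Qed.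

Lemma usp_ge u v vs es : usp_path u v vs es -> size vs <= usp G.
Proof.
move=> H; case: (H) => /is_pathP [p [E0 _ U _]] _.
have lt : size vs < #|gV G|.+1 by rewrite ltnS E0; exact: card_uniq_lt U.
have P0 : cdec (exists u v vs' es, @usp_path G u v vs' es /\ size vs' = Ordinal lt).
  by apply: cdecT; exists u, v, vs, es.
exact: (leq_bigmax_cond (Ordinal lt) P0).
Qed.

Lemma usp_att : usp G = 0 \/ exists u v vs es, usp_path u v vs es /\ size vs = usp G.
Proof.
rewrite /usp; elim/big_ind: _.
- by left.
- move=> m1 m2 H1 H2 /=; case: (leqP m1 m2) => H.
  + by [].
  + by [].
- move=> i /cdecP [u [v [vs [es [U S]]]]]; right; by exists u, v, vs, es.
Qed.

Lemma usp_le_card : usp G <= #|gV G|.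
Proof. by apply/bigmax_leqP => i _; rewrite -ltnS. Qed.

Lemma sys_conn_weight s : (forall x y, connect adj x y) -> sys adj s -> weight s <= (diam G).+1.
Proof.
move=> C; case: s => [|[u p] s] //= [Hg Hall _].
have -> : s = [::].
  by case: s Hall => // e s /= /andP[]; rewrite C.
rewrite weight_cons /= addn0 ltnS -(geo_dist Hg); exact: dist_le_diam.
Qed.

End Graph.
Arguments adj : clear implicits.

Lemma joins_map (G H : mgraph) (f : gV G -> gV H) (e : gE G) (e' : gE H) x y :
  joins e' (f (gsrc e)) (f (gdst e)) -> joins e x y -> joins e' (f x) (f y).
Proof.
rewrite /joins => + /orP[]/andP[/eqP<- /eqP<-] => //; by rewrite orbC.
Qed.

Lemma joins_inj (G H : mgraph) (f : gV G -> gV H) (e : gE G) (e' : gE H) x y :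
  injective f -> joins e' (f (gsrc e)) (f (gdst e)) -> joins e' (f x) (f y) -> joins e x y.
Proof.
move=> inj; rewrite /joins.
case/orP=> /andP[/eqP E1 /eqP E2]; case/orP=> /andP[/eqP E3 /eqP E4].
all: rewrite ?(inj _ _ (etrans (esym E1) E3)) ?(inj _ _ (etrans (esym E2) E4)) !eqxx ?orbT //.
Qed.

Section Drop.
Variable V : finType.
Variables (R : rel V) (v0 : V).
Hypothesis hiso : forall y, ~~ R v0 y.

Lemma sys_filter (P : pred (V * seq V)) s : sys R s -> sys R (filter P s).
Proof.
elim: s => //= e s IH [G A S]; case: ifP => _ /=; last exact: IH.
split => //; last exact: IH.
rewrite all_filter; apply: sub_all A => x /= ->; by rewrite implybT.
Qed.

Lemma sys_drop_w s : sys R s ->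
  weight s <= weight (filter (fun e => e.1 != v0) s) + has (fun e => e.1 == v0) s.
Proof.
elim: s => //= [[u p] s] IH /= [[Pp _ _ _] A S].
have W := IH S.
case: (eqVneq u v0) => [E|ne] /=.
  subst u.
  have -> : p = [::] by case: p Pp => // y p /= /andP[H _]; move: (hiso y); rewrite H.
  have Hh : has (fun e => e.1 == v0) s = false.
    apply/negP => /hasP [e He /eqP E]; move: (allP A e He); by rewrite E connect0.
  move: W; rewrite Hh weight_cons /=; lia.
by rewrite !weight_cons /=; move: W; lia.
Qed.

Lemma sys_drop s : sys R s -> exists s', [/\ sys R s', weight s <= weight s' + 1 &
  all (fun e => e.1 != v0) s'].
Proof.
move=> S; exists (filter (fun e => e.1 != v0) s); split.
- exact: sys_filter.
- have := sys_drop_w S; case: (has _ s) => /=; lia.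
- by rewrite all_filter; apply/allP => x _ /=; rewrite implybb.
Qed.
End Drop.

Lemma adj_transfer (G H : mgraph) (fv : gV G -> gV H) (fe : gE G -> gE H) :
  injective fv -> (forall e', exists e, fe e = e') ->
  (forall e, joins (fe e) (fv (gsrc e)) (fv (gdst e))) ->
  forall x y, adj G x y = adj H (fv x) (fv y).
Proof.
move=> inj sur J x y; apply/existsP/existsP => [][e He].
  by exists (fe e); apply: joins_map (J e) He.
have [e0 E0] := sur e; subst e; exists e0; exact: joins_inj inj (J e0) He.
Qed.

Lemma joins_lift (G H : mgraph) (f : gV G -> gV H) (e' : gE H) s d x' y' :
  joins e' (f s) (f d) -> joins e' x' y' ->
  (x' = f s /\ y' = f d) \/ (x' = f d /\ y' = f s).
Proof.
rewrite /joins.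
case/orP=> /andP[/eqP E1 /eqP E2]; case/orP=> /andP[/eqP E3 /eqP E4].
- by left; rewrite -E3 -E4 E1 E2.
- by right; rewrite -E3 -E4 E1 E2.
- by right; rewrite -E3 -E4 E1 E2.
- by left; rewrite -E3 -E4 E1 E2.
Qed.

Lemma bij_sur (T1 T2 : Type) (f : T1 -> T2) : bijective f -> forall y, exists x, f x = y.
Proof. by case=> g _ c y; exists (g y); rewrite c. Qed.

Lemma LB G H : minor G H -> exists s, sys (adj G) s /\ #|gV G| <= sp H + weight s.
Proof.
elim=> {G H} [G H [fv [fe [bv be J]]] | G K H Hel _ [sK [SK WK]]].
- have inj := bij_inj bv.
  have sur := bij_sur bv.
  have hf := adj_transfer inj (bij_sur be) J.
  have eqc : #|gV G| = #|gV H| := bij_eq_card bv.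
  have UL := usp_le_card H.
  case: (usp_att H) => [U0|[u [v [vs [es [U Sz]]]]]].
    exists [::]; split => //; rewrite /sp U0 eqc /weight /=; lia.
  case: (U) => /is_pathP [p [E0 _ _ L]] _; subst vs.
  have Gg := usp_geo U.
  have S2 : sys (adj H) [:: (u, p)] by rewrite /= L; split.
  have [s1 [S1 W1 _]] := sys_pull hf (fun x y2 _ => sur y2) S2 (fun e _ => sur e.1).
  exists s1; split => //; rewrite W1 /sp eqc /weight /=; move: Sz UL => /= Sz UL; lia.
- case: Hel => [[v0 [fv [fe [Hv [inj nv sv be J]]]]] | [[e0 [fv [fe [bv inj ne se J]]]] | [e0 [Hpar [fv [fe [sv [Hid [inj ne se J]]]]]]]]].
  +
    have hiso : forall y, ~~ adj K v0 y.
      move=> y; apply/existsP => [][e]; rewrite /joins; move: (Hv e).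
      by case/andP => /negbTE E1 /negbTE E2; rewrite E1 E2 andbF.
    have [s' [S' W' A']] := sys_drop hiso SK.
    have hf := adj_transfer inj (bij_sur be) J.
    have hcl : forall x y2, adj K (fv x) y2 -> exists y, fv y = y2.
      move=> x y2 Ad; apply: sv; apply/eqP => E; subst y2.
      by move: (hiso (fv x)); rewrite adj_sym Ad.
    have [s1 [S1 W1 _]] := sys_pull hf hcl S' (fun e He => sv _ (allP A' e He)).
    have cK : #|gV K| = #|gV G| + 1.
      have gt0 : 0 < #|gV K| by apply/card_gt0P; exists v0.
      have : #|[set~ v0]| = #|gV K|.-1 by apply: cardsC1.
      have -> : [set~ v0] = fv @: [set: gV G].
        apply/setP => y; rewrite !inE; apply/idP/imsetP.
          by move=> /sv [x <-]; exists x.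
        by case=> x _ ->.
      rewrite card_imset // cardsT; lia.
    exists s1; split => //; move: WK W'; rewrite cK W1; lia.
  +
    have hsub : forall x y, adjn e0 x y -> adj K x y.
      by move=> x y /existsP [e /andP[_ Je]]; apply/existsP; exists e.
    have hdiff : forall x y, adj K x y -> ~~ adjn e0 x y ->
        ((x == gsrc e0) && (y == gdst e0)) || ((x == gdst e0) && (y == gsrc e0)).
      move=> x y /existsP [e Je] N; case: (eqVneq e e0) => [E|ne'].
        subst e; case/orP: Je => /andP[/eqP-> /eqP->]; by rewrite !eqxx ?orbT.
      by move: N; rewrite (_ : adjn e0 x y) //; apply/existsP; exists e; rewrite ne' Je.
    have [s' [S' W' _]] := sys_split (@adj_sym K) (adjn_sym e0) hsub hdiff SK.
    have hf : forall x y, adj G x y = adjn e0 (fv x) (fv y).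
      move=> x y; apply/existsP/existsP => [][e He].
        by exists (fe e); rewrite ne; apply: joins_map (J e) He.
      case/andP: He => nee He; have [e1 E1] := se _ nee; subst e.
      exists e1; exact: joins_inj (bij_inj bv) (J e1) He.
    have sur := bij_sur bv.
    have [s1 [S1 W1 _]] := sys_pull hf (fun x y2 _ => sur y2) S' (fun e _ => sur e.1).
    exists s1; split => //; rewrite W1 (bij_eq_card bv); move: WK W'; lia.
  +
    have hab : adj K (gsrc e0) (gdst e0).
      by apply/existsP; exists e0; rewrite /joins !eqxx.
    have hfab : fv (gsrc e0) = fv (gdst e0) by apply/Hid; right; left.
    have hid : forall x y, fv x = fv y ->
        x = y \/ (x = gsrc e0 /\ y = gdst e0) \/ (x = gdst e0 /\ y = gsrc e0).
      by move=> x y /Hid.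
    have hmap : forall s t, adj K s t -> fv s = fv t \/ adj G (fv s) (fv t).
      move=> s t /existsP [e Je]; case: (eqVneq e e0) => [E|nee].
        subst e; left; apply/Hid; right.
        by case/orP: Je => /andP[/eqP<- /eqP<-]; [left|right].
      right; have [e1 E1] := se _ nee; subst e.
      apply/existsP; exists e1; exact: joins_map (J e1) Je.
    have hlift : forall x' y', adj G x' y' -> exists x y, [/\ fv x = x', fv y = y' & adj K x y].
      move=> x' y' /existsP [e' Je].
      case: (joins_lift (J e') Je) => [][-> ->].
        by exists (gsrc (fe e')), (gdst (fe e')); split => //; apply/existsP; exists (fe e'); rewrite /joins !eqxx.
      by exists (gdst (fe e')), (gsrc (fe e')); split => //; apply/existsP; exists (fe e'); rewrite /joins !eqxx orbT.
    have [s' [S' W' _]] := sys_contract (@adj_sym K) (@adj_sym G) hmap hlift hab hfab hid SK.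
    have cK : #|gV K| = #|gV G| + 1.
      have nab := gnoloop e0.
      have gt0 : 0 < #|gV K| by apply/card_gt0P; exists (gsrc e0).
      have : #|[set~ gdst e0]| = #|gV K|.-1 by apply: cardsC1.
      have Him : fv @: [set~ gdst e0] = [set: gV G].
        apply/setP => y; rewrite !inE; apply/imsetP; have [x <-] := sv y.
        case: (eqVneq x (gdst e0)) => [->|nx].
          by exists (gsrc e0); rewrite ?inE // hfab.
        by exists x; rewrite ?inE.
      have Hinj : {in [set~ gdst e0] &, injective fv}.
        move=> x y; rewrite !inE => nx ny /Hid [//|[][E1 E2]].
          by rewrite E2 eqxx in ny.
        by rewrite E1 eqxx in nx.
      move: (card_in_imset Hinj); rewrite Him cardsT; lia.
    exists s'; split => //; move: WK W'; rewrite cK; case: (has _ s'); lia.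
Qed.

Lemma minor_refl G : minor G G.
Proof.
apply: minor_iso; exists id, id; split; try exists id => //.
by move=> e; rewrite /joins !eqxx.
Qed.

Lemma spfloor_ub G H : minor G H -> spfloor G <= sp H.
Proof.
move=> M; rewrite /spfloor; case: ex_minnP => m _ Hm; apply: Hm; apply: cdecT; by exists H.
Qed.

Lemma spfloor_spec G : exists H, minor G H /\ sp H = spfloor G.
Proof. rewrite /spfloor; case: ex_minnP => m /cdecP [H [M S]] _; by exists H. Qed.

Lemma spfloor_mono G' G : elem_minor G' G -> spfloor G' <= spfloor G.
Proof.
move=> E; have [H [M S]] := spfloor_spec G; rewrite -S; apply: spfloor_ub.
exact: minor_step E M.
Qed.

Lemma spfloor_lb G : (forall x y, connect (adj G) x y) -> #|gV G| <= spfloor G + (diam G).+1.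
Proof.
move=> C; have [H [M S]] := spfloor_spec G; have [s [Ss W]] := LB M.
have := sys_conn_weight C Ss; rewrite -S; lia.
Qed.

Section EC.
Variable G : mgraph.
Implicit Types (x y u v : gV G) (e : gE G).

Definition EC := forall e : gE G, ~~ connect (adjn e) (gsrc e) (gdst e).

Lemma ep_mem x p es f : ep x p es -> f \in es -> (gsrc f \in x :: p) && (gdst f \in x :: p).
Proof.
elim: p x es => [|y p IH] x [|g es] //= /andP[J E]; rewrite inE => /orP[/eqP->|H].
  case/orP: J => /andP[/eqP-> /eqP->]; by rewrite !inE !eqxx ?orbT.
case/andP: (IH _ _ E H); rewrite !inE => -> ->; by rewrite !orbT.
Qed.

Lemma ep_uniq x p es : ep x p es -> uniq (x :: p) -> uniq es.
Proof.
elim: p x es => [|y p IH] x [|e es] //= /andP[J E] /andP[nx U].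
rewrite (IH _ _ E U) andbT; apply/negP => H.
case/andP: (ep_mem E H) => H1 H2; move: nx.
by case/orP: J => /andP[/eqP E1 /eqP E2]; [rewrite -E1 H1 | rewrite -E2 H2].
Qed.

Lemma joins_uniq e u y y2 : joins e u y -> joins e u y2 -> y = y2.
Proof.
have nl := gnoloop e.
rewrite /joins => /orP[]/andP[/eqP E1 /eqP E2] /orP[]/andP[/eqP E3 /eqP E4].
- by rewrite -E2 -E4.
- by move: nl; rewrite E1 E4 eqxx.
- by move: nl; rewrite E3 E2 eqxx.
- by rewrite -E1 -E3.
Qed.

Lemma ep_cycle x q es e y : ep x q es ->
  all (fun t => joins t.1 t.2.1 t.2.2) (zip (es ++ [:: e]) (zip (x :: q) (rcons q y))) =
  joins e (last x q) y.
Proof.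
elim: q x es => [|z q IH] x [|f es] //=; first by rewrite andbT.
by case/andP => -> /IH ->.
Qed.

Lemma acyclic_EC : acyclic G -> EC.
Proof.
move=> Ac e; apply/negP => /connectP [p0 P0 L0].
have [q [Pq Lq Uq _]] := shorten_walk P0.
have [es [E N]] := pathn_ep Pq.
apply: (Ac (gsrc e :: q) (es ++ [:: e])); exists (gsrc e); split.
- case: q Lq {Pq Uq E} => [|z q] /= Lq; last by [].
  by move: (gnoloop e); rewrite L0 -Lq eqxx.
- by rewrite size_cat /= (ep_size E) addn1.
- exact: Uq.
- rewrite cat_uniq; apply/and3P; split => //; [exact: ep_uniq E Uq | by rewrite /= orbF].
- rewrite /= (ep_cycle _ _ E) Lq -L0 /joins !eqxx; by rewrite orbT.
Qed.

Lemma PU : EC -> forall u p es q fs, ep u p es -> uniq (u :: p) -> ep u q fs ->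
  uniq (u :: q) -> last u p = last u q -> p = q /\ es = fs.
Proof.
move=> Ec u p; elim: p u => [|y p IH] u [|e es] //.
  move=> [|y2 q] [|f fs] //= _ _ E2 /andP[nu _] L.
  by move: nu; rewrite L mem_last.
move=> [|y2 q] [|f fs] //=.
  move=> _ /andP[nu _] _ _ L; by move: nu; rewrite -L mem_last.
case/andP=> J1 E1 /andP[nu1 U1] /andP[J2 E2] /andP[nu2 U2] L.
case: (eqVneq e f) => [ef|nef].
  subst f; have yy := joins_uniq J1 J2; subst y2.
  by case: (IH _ _ _ _ E1 U1 E2 U2 L) => -> ->.
exfalso.
have Ues : uniq (e :: es) by apply: (ep_uniq (x := u) (p := y :: p)); rewrite /= ?J1 ?E1 //= nu1 U1.
have nes : e \notin es by case/andP: Ues.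
have nfs : e \notin fs.
  apply/negP => H; case/andP: (ep_mem E2 H) => H1 H2; move: nu2.
  by case/orP: J1 => /andP[/eqP E3 /eqP E4]; [rewrite -E3 H1 | rewrite -E4 H2].
have P2 : path (adjn e) u (y2 :: q).
  by apply: (ep_pathn (es := f :: fs)); rewrite /= ?J2 ?E2 // inE negb_or nef nfs.
have P1 := ep_pathn E1 nes.
have C1 := path_con P2. have C2 := path_con P1.
have cs := sym_connect_sym (adjn_sym e).
have Cuy : connect (adjn e) u y.
  apply: connect_trans C1 _; rewrite /= -L cs; exact: C2.
move: (Ec e); case/orP: J1 => /andP[/eqP-> /eqP->]; by rewrite ?Cuy // cs Cuy.
Qed.

Lemma EC_usp : EC -> forall u v vs es, is_path u v vs es -> usp_path u v vs es.
Proof.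
move=> Ec u v vs es H; split => // vs' es' H'.
case/is_pathP: H => p [-> E U L]; case/is_pathP: H' => q [-> E' U' L'].
have [-> ->] := PU Ec E U E' U' (etrans L (esym L')); by [].
Qed.

End EC.

Lemma contract_data G K e0 : @contract_edge G K e0 -> exists fv : gV K -> gV G,
  [/\ (forall y, exists x, fv x = y),
      (forall s t, adj K s t -> fv s = fv t \/ adj G (fv s) (fv t)),
      (forall x' y', adj G x' y' -> exists x y, [/\ fv x = x', fv y = y' & adj K x y]),
      fv (gsrc e0) = fv (gdst e0) &
      (forall x y, fv x = fv y -> x = y \/ (x = gsrc e0 /\ y = gdst e0) \/ (x = gdst e0 /\ y = gsrc e0))]
  /\ #|gV K| = #|gV G| + 1.
Proof.
case=> Hpar [fv [fe [sv [Hid [inj ne se J]]]]]; exists fv.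
have hfab : fv (gsrc e0) = fv (gdst e0) by apply/Hid; right; left.
have hid : forall x y, fv x = fv y ->
    x = y \/ (x = gsrc e0 /\ y = gdst e0) \/ (x = gdst e0 /\ y = gsrc e0).
  by move=> x y /Hid.
split; first split => //.
- move=> s t /existsP [e Je]; case: (eqVneq e e0) => [E|nee].
    subst e; left; apply/Hid; right.
    by case/orP: Je => /andP[/eqP<- /eqP<-]; [left|right].
  right; have [e1 E1] := se _ nee; subst e.
  apply/existsP; exists e1; exact: joins_map (J e1) Je.
- move=> x' y' /existsP [e' Je].
  case: (joins_lift (J e') Je) => [][-> ->].
    by exists (gsrc (fe e')), (gdst (fe e')); split => //; apply/existsP; exists (fe e'); rewrite /joins !eqxx.
  by exists (gdst (fe e')), (gsrc (fe e')); split => //; apply/existsP; exists (fe e'); rewrite /joins !eqxx orbT.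
have nab := gnoloop e0.
have gt0 : 0 < #|gV K| by apply/card_gt0P; exists (gsrc e0).
have : #|[set~ gdst e0]| = #|gV K|.-1 by apply: cardsC1.
have Him : fv @: [set~ gdst e0] = [set: gV G].
  apply/setP => y; rewrite !inE; apply/imsetP; have [x <-] := sv y.
  case: (eqVneq x (gdst e0)) => [->|nx].
    by exists (gsrc e0); rewrite ?inE // hfab.
  by exists x; rewrite ?inE.
have Hinj : {in [set~ gdst e0] &, injective fv}.
  move=> x y; rewrite !inE => nx ny /Hid [//|[][E1 E2]].
    by rewrite E2 eqxx in ny.
  by rewrite E1 eqxx in nx.
move: (card_in_imset Hinj); rewrite Him cardsT; lia.
Qed.

Lemma tree_conn T : is_tree T -> forall x y, connect (adj T) x y.
Proof.
case=> _ [C _] x y; have [vs [es /is_pathP [p [_ E _ L]]]] := C x y.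
rewrite -L; apply: path_con; exact: ep_path E.
Qed.

Lemma diam_att G : diam G = 0 \/ exists u v : gV G, dist u v = diam G.
Proof.
rewrite /diam; elim/big_ind: _.
- by left.
- move=> m1 m2 H1 H2 /=; case: (leqP m1 m2) => H; by [].
- move=> u _; elim/big_ind: _.
  + by left.
  + move=> m1 m2 H1 H2 /=; case: (leqP m1 m2) => H; by [].
  + move=> v _; right; by exists u, v.
Qed.

Lemma EC_usp_diam G : 0 < #|gV G| -> EC G -> (forall x y, connect (adj G) x y) ->
  (diam G).+1 <= usp G.
Proof.
move=> /card_gt0P [x0 _] Ec C.
case: (diam_att G) => [->|[u [v Duv]]].
  have : is_path x0 x0 [:: x0] [::] by apply/is_pathP; exists [::].
  by move/(EC_usp Ec)/usp_ge.
have [p Gp] := geo_exists (C u v).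
have Dp := geo_dist Gp.
case: (Gp) => Pp Lp Up _.
have [es E] := path_ep Pp.
have : is_path u v (u :: p) es by apply/is_pathP; exists p.
move/(EC_usp Ec)/usp_ge; by rewrite /= -Duv Dp.
Qed.

Lemma ep_rcons G (x : gV G) p es y f :
  ep x (rcons p y) (rcons es f) = ep x p es && joins f (last x p) y.
Proof.
elim: p x es => [|z p IH] x [|g es] //=.
- by rewrite andbT.
- by case: es => [|? ?]; rewrite /= andbF.
- by case: p {IH} => [|? ?]; rewrite /= andbF.
- by rewrite IH andbA.
Qed.

Lemma ep_split G (x : gV G) q hs f : ep x q hs -> f \in hs ->
  exists q1 z q2 h1 h2, [/\ q = q1 ++ z :: q2, hs = h1 ++ f :: h2, ep x q1 h1,
     joins f (last x q1) z & ep z q2 h2 /\ f \notin h1].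
Proof.
elim: q x hs => [|y q IH] x [|g hs] //= /andP[J E].
rewrite inE; case: (eqVneq f g) => [E0 _|nfg /= H].
  by subst; exists [::], y, q, [::], hs; split.
have [q1 [z [q2 [h1 [h2 [-> -> E1 J1 [E2 N1]]]]]]] := IH _ _ E H.
exists (y :: q1), z, q2, (g :: h1), h2; split => //=.
- by rewrite J E1.
- by rewrite inE negb_or nfg N1.
Qed.

Lemma dist_le_walk G (u : gV G) q : path (adj G) u q -> dist u (last u q) <= size q.
Proof.
move=> P; have [q0 [P0 L0 U0 M0]] := geo_exists (path_con P).
rewrite (geo_dist (And4 P0 L0 U0 M0)); exact: M0.
Qed.

Section Redirect.
Variables (T : mgraph) (e : gE T) (v w : gV T).
Hypothesis hvw : v != w.
Definition rsrc (f : gE T) := if f == e then v else gsrc f.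
Definition rdst (f : gE T) := if f == e then w else gdst f.
Lemma rnoloop f : rsrc f != rdst f.
Proof. rewrite /rsrc /rdst; case: (f == e) => //; exact: gnoloop. Qed.
Definition Tr := @MGraph (gV T) (gE T) rsrc rdst rnoloop.

Lemma joins_r f a b : f != e -> @joins Tr f a b = joins f a b.
Proof. by move=> ne; rewrite /joins /= /rsrc /rdst (negbTE ne). Qed.

Lemma joins_re a b : @joins Tr e a b = ((v == a) && (w == b)) || ((v == b) && (w == a)).
Proof. by rewrite /joins /= /rsrc /rdst eqxx. Qed.

Lemma ep_r x p es : e \notin es -> @ep Tr x p es = @ep T x p es.
Proof.
elim: p x es => [|y p IH] x [|f es] //=; rewrite inE negb_or => /andP[ne N].
by rewrite joins_r 1?eq_sym // IH.
Qed.

Lemma del_edge_Tr G' : @del_edge G' T e -> @del_edge G' Tr e.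
Proof.
case=> fv [fe [bv inj ne se J]]; exists fv, fe; split => // e'.
rewrite joins_r ?ne //; exact: J.
Qed.

Lemma Tr_usp x p es : EC T -> @ep T x p es -> e \notin es -> uniq (x :: p) ->
  last x p = v -> ~~ connect (adjn e) x w ->
  @usp_path Tr x w (x :: rcons p w) (rcons es e).
Proof.
move=> EcT E N U L Nxw.
have Pn := ep_pathn E N.
have wn : w \notin x :: p.
  apply/negP => Hw; have := path_connect Pn Hw; by rewrite (negbTE Nxw).
split.
  apply/is_pathP; exists (rcons p w); split => //.
  - by rewrite ep_rcons ep_r // E /= L joins_re !eqxx.
  - by rewrite -rcons_cons rcons_uniq wn U.
  - by rewrite last_rcons.
move=> vs' hs /is_pathP [q [-> E' U' L']].
suff [Eq Eh] : q = rcons p w /\ hs = rcons es e by subst; split.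
have He : e \in hs.
  apply/negPn/negP => N'; rewrite ep_r // in E'.
  have := path_con (ep_pathn E' N'); by rewrite L' (negbTE Nxw).
have [q1 [z [q2 [h1 [h2 [Eq Eh E1 J [E2 N1]]]]]]] := ep_split E' He.
subst q hs; clear E' He.
move: U'; rewrite -cat_cons cat_uniq => /and3P[U1 Hd U2].
rewrite last_cat /= in L'.
rewrite ep_r // in E1.
rewrite joins_re in J.
case/orP: J => /andP[/eqP Ev /eqP Ew].
- subst z.
  have q2n : q2 = [::].
    case: q2 L' U2 {E2 Hd} => // y q2 /= L' /andP[nw _].
    by move: nw; rewrite -L' mem_last.
  subst q2; have h2n : h2 = [::] by case: h2 E2.
  subst h2.
  have [-> ->] := PU EcT E1 U1 E U (etrans (esym Ev) (esym L)).
  by rewrite !cats1.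
- exfalso; subst z.
  have wq2 : w \in v :: q2.
    case: q2 L' {E2 U2 Hd} => [/= Lv|y q2 /= L'].
      by move: hvw; rewrite Lv eqxx.
    by rewrite inE -L' mem_last orbT.
  move/hasP: Hd; apply; exists w => //; rewrite Ew; exact: mem_last.
Qed.

End Redirect.

Section ContractC.
Variables (T : mgraph) (e : gE T).
Hypothesis Hnp : forall f, f != e -> ~~ joins f (gsrc e) (gdst e).
Definition cV := {x : gV T | x != gdst e}.
Definition cE := {f : gE T | f != e}.
Definition c0 : cV := exist _ (gsrc e) (gnoloop e).
Definition cmap (x : gV T) : cV := insubd c0 (if x == gdst e then gsrc e else x).

Lemma val_cmap x : val (cmap x) = if x == gdst e then gsrc e else x.
Proof. rewrite /cmap insubdK //; case: ifP => [_|/negbT] //; exact: gnoloop. Qed.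

Definition csrc (f : cE) := cmap (gsrc (val f)).
Definition cdst (f : cE) := cmap (gdst (val f)).

Lemma cnoloop f : csrc f != cdst f.
Proof.
apply/eqP => /(congr1 val); rewrite /csrc /cdst !val_cmap.
have ng : val f != e := valP f.
have nl := gnoloop (val f).
have := Hnp ng; rewrite /joins.
case: (eqVneq (gsrc (val f)) (gdst e)) => [Es|ns];
  case: (eqVneq (gdst (val f)) (gdst e)) => [Ed|nd].
- by move: nl; rewrite Es Ed eqxx.
- by move=> + E; rewrite Es E !eqxx orbT.
- by move=> + E; rewrite Ed -E !eqxx.
- by move=> _ E; move: nl; rewrite E eqxx.
Qed.

Definition Tc := @MGraph cV cE csrc cdst cnoloop.

Lemma contract_Tc : @contract_edge Tc T e.
Proof.
split; first exact: Hnp.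
exists cmap, (fun f : cE => val f); split.
  move=> y; exists (val y); apply: val_inj; rewrite val_cmap.
  by rewrite (negbTE (valP y)).
split.
  move=> a b; split.
    move/(congr1 val); rewrite !val_cmap.
    case: (eqVneq a (gdst e)) => [->|na]; case: (eqVneq b (gdst e)) => [->|nb] //.
    - by left.
    - by move=> <-; right; right.
    - by move=> ->; right; left.
    - by left.
  case=> [->|[[-> ->]|[-> ->]]] //; apply: val_inj; rewrite !val_cmap eqxx;
    by rewrite (negbTE (gnoloop e)).
split.
- exact: val_inj.
- by move=> [f nf].
- by move=> f nf; exists (exist _ f nf).
- by move=> f; rewrite /joins /= !eqxx.
Qed.

End ContractC.

Lemma contract_EC G' T e : @contract_edge G' T e -> EC T -> EC G'.
Proof.
case=> Hpar [fv [fe [sv [Hid [inj ne se J]]]]] EcT f'; apply/negP => C.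
set f := fe f'.
have nfe : f != e := ne f'.
have hlift : forall x' y', adjn f' x' y' ->
    exists x y, [/\ fv x = x', fv y = y' & adjn f x y].
  move=> x' y' /existsP [g' /andP[ng' Jg']].
  have nfg : fe g' != f by apply: contra ng' => /eqP /inj ->.
  case: (joins_lift (J g') Jg') => [][-> ->].
    by exists (gsrc (fe g')), (gdst (fe g')); split => //; apply/existsP; exists (fe g'); rewrite nfg /joins !eqxx.
  by exists (gdst (fe g')), (gsrc (fe g')); split => //; apply/existsP; exists (fe g'); rewrite nfg /joins !eqxx orbT.
have hab : adjn f (gsrc e) (gdst e).
  by apply/existsP; exists e; rewrite eq_sym nfe /joins !eqxx.
have hfab : fv (gsrc e) = fv (gdst e) by apply/Hid; right; left.
have hid : forall x y, fv x = fv y ->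
    x = y \/ (x = gsrc e /\ y = gdst e) \/ (x = gdst e /\ y = gsrc e).
  by move=> x y /Hid.
have CL := con_lift (adjn_sym f) hlift hab hfab hid.
have cs := sym_connect_sym (adjn_sym f).
have Jf : joins f' (gsrc f') (gdst f') by rewrite /joins !eqxx.
move: (EcT f); case: (joins_lift (J f') Jf) => [][E1 E2]; rewrite -/f in E1 E2.
- by rewrite CL // -E1 -E2.
- by rewrite cs CL // -E1 -E2.
Qed.

Lemma nocollapse T (e : gE T) (V2 : finType) (fv : gV T -> V2) x p :
  fv (gsrc e) = fv (gdst e) ->
  path (adj T) x p -> path (fun s t => fv s != fv t) x p -> path (adjn e) x p.
Proof.
move=> hfab; elim: p x => [|y p IH] x //= /andP[/existsP [g Jg] P] /andP[N Q].
rewrite (IH _ P Q) andbT; apply/existsP; exists g; rewrite Jg andbT.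
apply: contra N => /eqP E; subst g.
by case/orP: Jg => /andP[/eqP<- /eqP<-]; rewrite hfab.
Qed.

Theorem theorem4p3 (T : mgraph) :
  is_tree T ->
  ((exists G' : mgraph, [/\ elem_minor G' T, 0 < #|gV G'| & spfloor G' = spfloor T])
   <->
   (exists (e : gE T) (G' : mgraph), @contract_edge G' T e /\ diam G' < diam T)).
Proof.
move=> Tt; have CT := tree_conn Tt.
case: (Tt) => n0 [_ Ac]; have EcT := acyclic_EC Ac.
have uT := EC_usp_diam n0 EcT CT.
have lbT := spfloor_lb CT.
have ubT : spfloor T <= sp T := spfloor_ub (minor_refl T).
have ucT := usp_le_card T.
rewrite /sp in ubT.
have cs e := sym_connect_sym (@adjn_sym T e).
split.
- case=> G' [Em n0' Eq].
  case: Em => [Hd|[[e Hd]|[e Hc]]].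
  + exfalso; case: Hd => [v0 [fv [fe [Hv [inj nv sv be J]]]]].
    case/card_gt0P: n0' => x' _.
    have /connectP [p P L] := CT v0 (fv x').
    case: p P L => [_ /= E|z p /= /andP[/existsP [g Jg] _] _].
      by move: (nv x'); rewrite -E eqxx.
    move: (Hv g); case/orP: Jg => /andP[/eqP-> /eqP->]; by rewrite eqxx ?andbF.
  +
    have Hnp : forall f, f != e -> ~~ joins f (gsrc e) (gdst e).
      move=> f nf; apply/negP => Jf; move: (EcT e); rewrite connect1 //.
      by apply/existsP; exists f; rewrite nf Jf.
    have ClaimC : forall x p, path (adjn e) x p -> uniq (x :: p) -> size p < diam T.
      move=> x p Pp Up; rewrite ltnNge; apply/negP => Dp.
      have [w Nw] : exists w, ~~ connect (adjn e) (last x p) w.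
        case: (boolP (connect (adjn e) (last x p) (gsrc e))) => H.
          exists (gdst e); apply: contra (EcT e) => H'.
          by apply: connect_trans H'; rewrite cs.
        by exists (gsrc e).
      have Nxw : ~~ connect (adjn e) x w.
        apply: contra Nw => H; apply: connect_trans H; rewrite cs; exact: path_con.
      have hvw : last x p != w by apply: contra Nw => /eqP ->; exact: connect0.
      have [es [E N]] := pathn_ep Pp.
      have U := Tr_usp hvw EcT E N Up erefl Nxw.
      have Us := usp_ge U.
      have M : minor G' (Tr e hvw).
        apply: minor_step (minor_refl _); right; left; exists e; exact: del_edge_Tr.
      have Sp := spfloor_ub M.
      have Uc := usp_le_card (Tr e hvw).
      have cTr : #|gV (Tr e hvw)| = #|gV T| := erefl.
      rewrite /sp Eq cTr in Sp; rewrite /= size_rcons in Us; rewrite cTr in Uc.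
      move: Sp Us Uc Dp lbT ubT uT ucT; clear; lia.
    exists e, (Tc Hnp); split; first exact: contract_Tc.
    have [fv [[sv hmap hlift hfab hid] cc]] := contract_data (contract_Tc Hnp).
    have hab : adj T (gsrc e) (gdst e) by apply/existsP; exists e; rewrite /joins !eqxx.
    have Dpos : 0 < diam T.
      have [p Gp] := geo_exists (CT (gsrc e) (gdst e)).
      have Dd := geo_dist Gp.
      have := dist_le_diam (gsrc e) (gdst e).
      case: Gp => _ L _ _.
      case: p L Dd => [/= L|y p _ ->].
        by move: (gnoloop e); rewrite L eqxx.
      by move=> H; apply: leq_trans H.
    suff Hall : forall x' y' : gV (Tc Hnp), dist x' y' < diam T.
      case: (diam_att (Tc Hnp)) => [->|[u [v <-]]] //; exact: Hall.
    move=> x' y'; have [x Ex] := sv x'; have [y Ey] := sv y'; subst x' y'.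
    have [p Gp] := geo_exists (CT x y).
    have Dxy := geo_dist Gp.
    have Dle := dist_le_diam x y.
    case: (Gp) => Pp Lp Up _.
    have [q [Pq Lq Sq Tq]] := map_walk hmap hab Pp.
    have Dq := dist_le_walk Pq.
    rewrite Lq Lp in Dq.
    case: (boolP (path (fun s t => fv s != fv t) x p)) => Hc.
      have := ClaimC x p (nocollapse hfab Pp Hc) Up.
      move: Dq Sq Dxy Dle; clear; lia.
    have := Tq Hc; move: Dq Dxy Dle; clear; lia.
  +
    exists e, G'; split => //.
    rewrite ltnNge; apply/negP => Dge.
    have [fv [[sv hmap hlift hfab hid] cc]] := contract_data Hc.
    have hab : adj T (gsrc e) (gdst e) by apply/existsP; exists e; rewrite /joins !eqxx.
    have CG' : forall x' y', connect (adj G') x' y'.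
      move=> x' y'; have [x <-] := sv x'; have [y <-] := sv y'.
      exact (con_map hmap hab (CT x y)).
    have EcG' := contract_EC Hc EcT.
    have uG := EC_usp_diam n0' EcG' CG'.
    have ubG : spfloor G' <= sp G' := spfloor_ub (minor_refl G').
    have ucG := usp_le_card G'.
    rewrite /sp Eq in ubG.
    move: ubG uG ucG Dge cc lbT ubT uT ucT; clear; lia.
- case=> e [G' [Hc Hd]]; exists G'.
  have [fv [[sv hmap hlift hfab hid] cc]] := contract_data Hc.
  have hab : adj T (gsrc e) (gdst e) by apply/existsP; exists e; rewrite /joins !eqxx.
  have CG' : forall x' y', connect (adj G') x' y'.
    move=> x' y'; have [x <-] := sv x'; have [y <-] := sv y'.
    exact (con_map hmap hab (CT x y)).
  have El : elem_minor G' T by right; right; exists e.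
  split => //.
    by apply/card_gt0P; exists (fv (gsrc e)).
  apply/eqP; rewrite eqn_leq (spfloor_mono El) /=.
  have lbG := spfloor_lb CG'.
  move: lbG cc Hd lbT ubT uT ucT; clear; lia.
Qed.
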